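(* Let $K\ge 1$, $T\ge 1$ and let $\ell_1,\dots,\ell_T\in[0,1]^K$ be arbitrary loss vectors. Then the regret of AdaHedge satisfies \[ \mathcal{R}^{\mathrm{ah}}_T\le 2\sqrt{\frac{L_T^*(T-L_T^* )}{T}\ln K}+\tfrac{16}{3}\ln K+2. \]
   Context: Hedge setting: there are $K$ experts; in round $t$ the learner chooses a probability vector $w_t=(w_{t,1},\dots,w_{t,K})$, then the loss vector $\ell_t=(\ell_{t,1},\dots,\ell_{t,K})$ is revealed and the learner suffers the Hedge loss $h_t=\sum_k w_{t,k}\ell_{t,k}$. Write $L_{t,k}=\sum_{s=1}^t \ell_{s,k}$ (with $L_{0,k}=0$), $L^*_t=\min_k L_{t,k}$, $H_T=\sum_{t=1}^T h_t$, and regret $\mathcal{R}_T=H_T-L^*_T$. Exponential weights with learning rate $\eta\in(0,\infty]$ at time $t$: $w_{t,k}=e^{-\eta L_{t-1,k}}/\sum_j e^{-\eta L_{t-1,j}}$ if $\eta<\infty$; if $\eta=\infty$, $w_t$ is uniform on $\{k: L_{t-1,k}=L^*_{t-1}\}$. If round $t$ uses learning rate $\eta_t$, the mix loss is $m_t=-\frac{1}{\eta_t}\ln\big(\sum_k w_{t,k}e^{-\eta_t\ell_{t,k}}\big)$ if $\eta_t<\infty$ and $m_t=L^*_t-L^*_{t-1}$ if $\eta_t=\infty$; the mixability gap is $\delta_t=h_t-m_t$, with $\Delta_t=\sum_{s\le t}\delta_s$. AdaHedge: $\Delta_0=0$ and, for $t=1,2,\dots$, the learning rate is $\eta^{\mathrm{ah}}_t=\ln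 K/\Delta^{\mathrm{ah}}_{t-1}$ (interpreted as $+\infty$ when $\Delta^{\mathrm{ah}}_{t-1}=0$), the weights $w^{\mathrm{ah}}_t$ are the exponential weights with learning rate $\eta^{\mathrm{ah}}_t$ computed from $L_{t-1}$, and $\Delta^{\mathrm{ah}}_t=\Delta^{\mathrm{ah}}_{t-1}+\delta^{\mathrm{ah}}_t$. $\mathcal{R}^{\mathrm{ah}}_T$ denotes the regret of AdaHedge. *)

(* Defs.v *)
From Stdlib Require Import Reals Lra.
Open Scope R_scope.

(* Loss sequence: loss t k = ell_{t,k}, rounds t = 1..T, experts k = 0..K-1. *)

Fixpoint sumk (n : nat) (f : nat -> R) : R :=
  match n with O => 0 | S m => sumk m f + f m end.

Fixpoint sumt (t : nat) (f : nat -> R) : R :=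
  match t with O => 0 | S s => sumt s f + f (S s) end.

Fixpoint minupto (n : nat) (f : nat -> R) : R :=
  match n with O => f O | S m => Rmin (minupto m f) (f (S m)) end.

Definition Lcum (loss : nat -> nat -> R) (t k : nat) : R :=
  sumt t (fun s => loss s k).

Definition Lstar (K : nat) (loss : nat -> nat -> R) (t : nat) : R :=
  minupto (K - 1) (fun k => Lcum loss t k).

(* learning rate in (0, +oo]: [Some eta] is finite eta, [None] is +oo *)
Definition lrate := option R.

Definition ew_weight (K : nat) (loss : nat -> nat -> R) (eta : lrate)
    (t k : nat) : R :=
  match eta with
  | Some e =>
      exp (- e * Lcum loss (t - 1) k) /
      sumk K (fun j => exp (- e * Lcum loss (t - 1) j))
  | None =>
      let ind j := if Req_EM_T (Lcum loss (t - 1) j) (Lstar K loss (t - 1))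
                   then 1 else 0 in
      ind k / sumk K ind
  end.

Definition hedge_loss (K : nat) (loss : nat -> nat -> R) (eta : lrate)
    (t : nat) : R :=
  sumk K (fun k => ew_weight K loss eta t k * loss t k).

Definition mix_loss (K : nat) (loss : nat -> nat -> R) (eta : lrate)
    (t : nat) : R :=
  match eta with
  | Some e =>
      - (1 / e) * ln (sumk K (fun k => ew_weight K loss eta t k *
                                        exp (- e * loss t k)))
  | None => Lstar K loss t - Lstar K loss (t - 1)
  end.

Definition mix_gap (K : nat) (loss : nat -> nat -> R) (eta : lrate)
    (t : nat) : R :=
  hedge_loss K loss eta t - mix_loss K loss eta t.

Definition ah_rate (K : nat) (D : R) : lrate :=
  if Req_EM_T D 0 then None else Some (ln (INR K) / D).

Fixpoint ah_Delta (K : nat) (loss : nat -> nat -> R) (t : nat) : R :=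
  match t with
  | O => 0
  | S s => ah_Delta K loss s
           + mix_gap K loss (ah_rate K (ah_Delta K loss s)) (S s)
  end.

Definition ah_eta (K : nat) (loss : nat -> nat -> R) (t : nat) : lrate :=
  ah_rate K (ah_Delta K loss (t - 1)).

Definition ah_H (K : nat) (loss : nat -> nat -> R) (T : nat) : R :=
  sumt T (fun t => hedge_loss K loss (ah_eta K loss t) t).

Definition ah_regret (K : nat) (loss : nat -> nat -> R) (T : nat) : R :=
  ah_H K loss T - Lstar K loss T.

(* Main.v *)
Require Import Defs.
From Stdlib Require Import Reals Lra Lia Psatz.
From Coquelicot Require Import Coquelicot.
Open Scope R_scope.

Lemma mvt_sign (f f' : R -> R) :
  (forall y, derivable_pt_lim f y (f' y)) ->
  (forall y, 0 <= y * f' y) -> forall x, f 0 <= f x.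
Proof.
  intros Hd Hs x.
  destruct (Rtotal_order x 0) as [Hx|[Hx|Hx]].
  - destruct (MVT_cor2 f f' x 0 Hx (fun c _ => Hd c)) as [c [Hc1 Hc2]].
    specialize (Hs c).
    assert (f' c <= 0) by nra. nra.
  - subst; lra.
  - destruct (MVT_cor2 f f' 0 x Hx (fun c _ => Hd c)) as [c [Hc1 Hc2]].
    specialize (Hs c).
    assert (0 <= f' c) by nra. nra.
Qed.

Lemma mvt_incr (f f' : R -> R) :
  (forall y, derivable_pt_lim f y (f' y)) ->
  (forall y, 0 <= f' y) -> forall x, 0 <= x * (f x - f 0).
Proof.
  intros Hd Hs x.
  destruct (Rtotal_order x 0) as [Hx|[Hx|Hx]].
  - destruct (MVT_cor2 f f' x 0 Hx (fun c _ => Hd c)) as [c [Hc1 Hc2]].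
    specialize (Hs c). nra.
  - subst; lra.
  - destruct (MVT_cor2 f f' 0 x Hx (fun c _ => Hd c)) as [c [Hc1 Hc2]].
    specialize (Hs c). nra.
Qed.

Lemma S1 x : 0 <= (x - 1) * exp x + 1.
Proof.
  pose (f := fun x => (x - 1) * exp x + 1).
  assert (H := mvt_sign f (fun y => y * exp y)).
  assert (f 0 = 0) by (unfold f; rewrite exp_0; ring).
  enough (f 0 <= f x) by (unfold f in *; lra).
  apply H.
  - intro y. apply is_derive_Reals. unfold f. auto_derive; auto. ring.
  - intro y. pose proof (exp_pos y). nra.
Qed.

Lemma S2 x : 0 <= x * ((x - 2) * exp x + x + 2).
Proof.
  pose (f := fun x => (x - 2) * exp x + x + 2).
  assert (H := mvt_incr f (fun y => (y - 1) * exp y + 1)).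
  assert (f 0 = 0) by (unfold f; rewrite exp_0; ring).
  enough (0 <= x * (f x - f 0)) by (unfold f in *; rewrite H0 in H1; lra).
  apply H.
  - intro y. apply is_derive_Reals. unfold f. auto_derive; auto. ring.
  - intro y. apply S1.
Qed.

Lemma S3 x : (1 - x / 3) * (exp x - 1 - x) <= x ^ 2 / 2.
Proof.
  pose (g := fun x => x ^ 2 / 2 - (1 - x / 3) * (exp x - 1 - x)).
  assert (H := mvt_sign g (fun y => ((y - 2) * exp y + y + 2) / 3)).
  assert (g 0 = 0) by (unfold g; rewrite exp_0; field).
  enough (g 0 <= g x) by (unfold g in *; lra).
  apply H.
  - intro y. apply is_derive_Reals. unfold g. auto_derive; auto. field.
  - intro y. pose proof (S2 y). lra.
Qed.

Lemma sumk_ext n f g : (forall k, (k < n)%nat -> f k = g k) -> sumk n f = sumk n g.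
Proof. induction n; simpl; intros H; auto. rewrite IHn by (intros; apply H; lia). rewrite H by lia. auto. Qed.

Lemma sumk_le n f g : (forall k, (k < n)%nat -> f k <= g k) -> sumk n f <= sumk n g.
Proof. induction n; simpl; intros H; [lra|]. assert (f n <= g n) by (apply H; lia). assert (sumk n f <= sumk n g) by (apply IHn; intros; apply H; lia). lra. Qed.

Lemma sumk_plus n f g : sumk n (fun k => f k + g k) = sumk n f + sumk n g.
Proof. induction n; simpl; [lra|]. rewrite IHn. ring. Qed.

Lemma sumk_minus n f g : sumk n (fun k => f k - g k) = sumk n f - sumk n g.
Proof. induction n; simpl; [lra|]. rewrite IHn. ring. Qed.

Lemma sumk_scal n a f : sumk n (fun k => a * f k) = a * sumk n f.
Proof. induction n; simpl; [lra|]. rewrite IHn. ring. Qed.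

Lemma sumk_scalr n a f : sumk n (fun k => f k * a) = sumk n f * a.
Proof. induction n; simpl; [lra|]. rewrite IHn. ring. Qed.

Lemma sumk_const n a : sumk n (fun _ => a) = INR n * a.
Proof. induction n; simpl sumk; [simpl; lra|]. rewrite IHn, S_INR. ring. Qed.

Lemma sumk_nonneg n f : (forall k, (k < n)%nat -> 0 <= f k) -> 0 <= sumk n f.
Proof. intros H. assert (H1 := sumk_le n (fun _ => 0) f H). rewrite sumk_const in H1. lra. Qed.

Lemma sumk_ge_term n f j : (forall k, (k < n)%nat -> 0 <= f k) -> (j < n)%nat -> f j <= sumk n f.
Proof.
  induction n; simpl; intros H Hj; [lia|].
  assert (0 <= f n) by (apply H; lia).
  destruct (Nat.eq_dec j n).
  - subst. assert (0 <= sumk n f) by (apply sumk_nonneg; intros; apply H; lia). lra.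
  - assert (f j <= sumk n f) by (apply IHn; [intros; apply H; lia| lia]). lra.
Qed.

Lemma sumk_pos_mul n w x : (forall k, (k < n)%nat -> 0 <= w k) ->
  (forall k, (k < n)%nat -> 0 < x k) -> 0 < sumk n w -> 0 < sumk n (fun k => w k * x k).
Proof.
  induction n; simpl; intros Hw Hx Hs; [lra|].
  assert (0 <= w n) by (apply Hw; lia). assert (0 < x n) by (apply Hx; lia).
  assert (0 <= sumk n w) by (apply sumk_nonneg; intros; apply Hw; lia).
  assert (0 <= sumk n (fun k => w k * x k)).
  { apply sumk_nonneg; intros. assert (0 <= w k) by (apply Hw; lia). assert (0 < x k) by (apply Hx; lia). nra. }
  destruct (Rle_lt_dec (sumk n w) 0).
  - assert (0 < w n) by lra. nra.
  - assert (0 < sumk n (fun k => w k * x k)). { apply IHn; [intros k Hk; apply Hw; lia|intros k Hk; apply Hx; lia|lra]. } nra.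
Qed.

Lemma ln_div' x y : 0 < x -> 0 < y -> ln (x / y) = ln x - ln y.
Proof. intros. unfold Rdiv. rewrite ln_mult, ln_Rinv; try apply Rinv_0_lt_compat; auto. Qed.

Lemma ln_le_sub1 y : 0 < y -> ln y <= y - 1.
Proof. intros. pose proof (exp_ineq1_le (ln y)). rewrite exp_ln in H0 by auto. lra. Qed.

Lemma jensen_ln n w x : (forall k, (k < n)%nat -> 0 <= w k) -> sumk n w = 1 ->
  (forall k, (k < n)%nat -> 0 < x k) ->
  sumk n (fun k => w k * ln (x k)) <= ln (sumk n (fun k => w k * x k)).
Proof.
  intros Hw Hs Hx.
  set (A := sumk n (fun k => w k * x k)).
  assert (HA : 0 < A) by (apply sumk_pos_mul; auto; lra).
  assert (E : sumk n (fun k => w k * ln (x k)) - ln A = sumk n (fun k => w k * ln (x k / A))).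
  { transitivity (sumk n (fun k => w k * ln (x k)) - sumk n w * ln A).
    - rewrite Hs; ring.
    - rewrite <- sumk_scalr, <- sumk_minus. apply sumk_ext. intros k Hk.
      rewrite ln_div' by auto. ring. }
  assert (sumk n (fun k => w k * ln (x k / A)) <= sumk n (fun k => w k * (x k / A - 1))).
  { apply sumk_le. intros k Hk. apply Rmult_le_compat_l; [auto|]. apply ln_le_sub1.
    apply Rdiv_lt_0_compat; auto. }
  assert (sumk n (fun k => w k * (x k / A - 1)) = 0).
  { transitivity (sumk n (fun k => w k * x k) * / A - sumk n w).
    - rewrite <- sumk_scalr, <- sumk_minus. apply sumk_ext. intros; unfold Rdiv; ring.
    - fold A. rewrite Hs. field. lra. }
  lra.
Qed.

Lemma exp_le' x y : x <= y -> exp x <= exp y.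
Proof. intros [H|H]; [left; apply exp_increasing; auto | subst; lra]. Qed.

Lemma ln_le' x y : 0 < x -> x <= y -> ln x <= ln y.
Proof. intros H [H1|H1]; [left; apply ln_increasing; auto | subst; lra]. Qed.



Lemma round_fin K w l e : (forall k, (k < K)%nat -> 0 <= w k) -> sumk K w = 1 ->
  (forall k, (k < K)%nat -> 0 <= l k <= 1) -> 0 < e ->
  let h := sumk K (fun k => w k * l k) in
  let d := h - (- (1/e) * ln (sumk K (fun k => w k * exp (- e * l k)))) in
  (0 <= h <= 1) /\ (0 <= d <= 1) /\ (1 - e/3) * d <= e/2 * (h * (1 - h)).
Proof.
  intros Hw Hs Hl He h d.
  assert (Hh : 0 <= h <= 1).
  { split.
    - apply sumk_nonneg. intros k Hk. specialize (Hw k Hk). specialize (Hl k Hk). nra.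
    - rewrite <- Hs. apply sumk_le. intros k Hk. specialize (Hw k Hk). specialize (Hl k Hk). nra. }
  set (S' := sumk K (fun k => w k * exp (- e * l k))).
  assert (HS : 0 < S') by (apply sumk_pos_mul; auto; [intros; apply exp_pos | lra]).
  assert (HS1 : S' <= 1).
  { rewrite <- Hs. apply sumk_le. intros k Hk. specialize (Hw k Hk). specialize (Hl k Hk).
    assert (exp (- e * l k) <= 1). { rewrite <- exp_0. apply exp_le'. nra. } nra. }
  assert (Hln0 : ln S' <= 0) by (rewrite <- ln_1; apply ln_le'; auto).
  assert (Hjen : - e * h <= ln S').
  { unfold S'. eapply Rle_trans; [|apply jensen_ln; auto; intros; apply exp_pos].
    unfold h. rewrite <- sumk_scal. right. apply sumk_ext. intros. rewrite ln_exp. ring. }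
  assert (Hd : e * d = e * h + ln S'). { unfold d. fold S'. field. lra. }
  split; [auto|split].
  { assert (0 <= e * d <= e) by nra. split; nra. }
  destruct (Rle_lt_dec 3 e) as [He3|He3].
  { assert (0 <= d) by nra. assert (0 <= h * (1 - h)) by nra. nra. }
  set (x := fun k => e * (h - l k)).
  assert (E1 : sumk K (fun k => w k * exp (x k)) = exp (e * h) * S').
  { unfold S'. rewrite <- sumk_scal. apply sumk_ext. intros k Hk. unfold x.
    replace (e * (h - l k)) with (e * h + - e * l k) by ring. rewrite exp_plus. ring. }
  assert (E2 : ln (sumk K (fun k => w k * exp (x k))) = e * h + ln S').
  { rewrite E1, ln_mult, ln_exp; auto using exp_pos. }
  assert (E3 : sumk K (fun k => w k * x k) = 0).
  { unfold x. transitivity (sumk K (fun k => (e * h) * w k - e * (w k * l k))).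
    - apply sumk_ext. intros; ring.
    - rewrite sumk_minus, !sumk_scal, Hs. fold h. ring. }
  assert (B1 : ln (sumk K (fun k => w k * exp (x k))) <=
               sumk K (fun k => w k * (exp (x k) - 1 - x k))).
  { eapply Rle_trans; [apply ln_le_sub1|].
    - apply sumk_pos_mul; auto; [intros; apply exp_pos|lra].
    - right. transitivity (sumk K (fun k => w k * exp (x k)) - sumk K w - sumk K (fun k => w k * x k)).
      + rewrite Hs, E3. ring.
      + rewrite <- !sumk_minus. apply sumk_ext; intros; ring. }
  assert (B2 : (1 - e/3) * sumk K (fun k => w k * (exp (x k) - 1 - x k)) <=
               sumk K (fun k => w k * (x k ^ 2 / 2))).
  { rewrite <- sumk_scal. apply sumk_le. intros k Hk.
    specialize (Hw k Hk). specialize (Hl k Hk). pose proof (S3 (x k)).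
    pose proof (exp_ineq1_le (x k)).
    assert (x k <= e) by (unfold x; nra).
    assert ((1 - e/3) * (exp (x k) - 1 - x k) <= (1 - x k / 3) * (exp (x k) - 1 - x k)) by nra.
    nra. }
  assert (B3 : sumk K (fun k => w k * (x k ^ 2 / 2)) <= e ^ 2 / 2 * (h * (1 - h))).
  { transitivity (sumk K (fun k => e^2/2 * (w k * l k) - (e^2/2*(2*h)) * (w k * l k) + (e^2/2*h^2) * w k)).
    - apply sumk_le.
      intros k Hk. specialize (Hw k Hk). specialize (Hl k Hk). unfold x.
      assert (l k ^ 2 <= l k) by nra.
      assert (w k * (l k) ^ 2 <= w k * l k) by (apply Rmult_le_compat_l; auto).
      assert (0 <= e ^ 2) by nra. nra.
    - rewrite sumk_plus, sumk_minus, !sumk_scal, Hs. fold h. right; ring. }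
  assert ((1 - e / 3) * (e * d) <= e ^ 2 / 2 * (h * (1 - h))) by nra.
  assert (e * ((1 - e/3) * d) <= e * (e / 2 * (h * (1 - h)))) by (field_simplify; field_simplify in H; lra).
  apply Rmult_le_reg_l with e; auto.
Qed.

Lemma minupto_le n f j : (j <= n)%nat -> minupto n f <= f j.
Proof.
  induction n; simpl; intros Hj.
  - replace j with 0%nat by lia. lra.
  - destruct (Nat.eq_dec j (S n)).
    + subst. apply Rmin_r.
    + eapply Rle_trans; [apply Rmin_l|]. apply IHn; lia.
Qed.

Lemma minupto_ex n f : exists j, (j <= n)%nat /\ minupto n f = f j.
Proof.
  induction n; simpl.
  - exists 0%nat; split; auto.
  - destruct IHn as [j [Hj E]]. unfold Rmin. destruct (Rle_dec (minupto n f) (f (S n))).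
    + exists j; split; auto.
    + exists (S n); split; auto.
Qed.

Lemma Lstar_le K loss t k : (k < K)%nat -> Lstar K loss t <= Lcum loss t k.
Proof. intros. unfold Lstar. apply (minupto_le _ (fun k => Lcum loss t k)). lia. Qed.

Lemma Lstar_ex K loss t : (1 <= K)%nat -> exists j, (j < K)%nat /\ Lstar K loss t = Lcum loss t j.
Proof. intros. unfold Lstar. destruct (minupto_ex (K-1) (fun k => Lcum loss t k)) as [j [Hj E]].
  exists j; split; auto; lia. Qed.

Lemma Lcum_S loss s k : Lcum loss (S s) k = Lcum loss s k + loss (S s) k.
Proof. reflexivity. Qed.

Lemma Lcum_0 loss k : Lcum loss 0 k = 0.
Proof. reflexivity. Qed.

Lemma Lstar_0 K loss : Lstar K loss 0 = 0.
Proof. unfold Lstar. generalize (K - 1)%nat. induction n; simpl; auto.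
  rewrite IHn, Lcum_0. unfold Rmin. destruct Rle_dec; auto. Qed.

Definition probw K (w : nat -> R) := (forall k, (k < K)%nat -> 0 <= w k) /\ sumk K w = 1.

Lemma sumk_div n f a : sumk n (fun k => f k / a) = sumk n f / a.
Proof. unfold Rdiv. apply sumk_scalr. Qed.

Lemma probw_some K loss e t : (1 <= K)%nat -> probw K (ew_weight K loss (Some e) t).
Proof.
  intros HK. unfold probw, ew_weight.
  set (a := fun j => exp (- e * Lcum loss (t - 1) j)).
  assert (HS : 0 < sumk K a).
  { apply Rlt_le_trans with (a 0%nat). unfold a; apply exp_pos.
    apply sumk_ge_term; [intros; unfold a; left; apply exp_pos | lia]. }
  split.
  - intros k Hk. unfold Rdiv. apply Rmult_le_pos. left; apply exp_pos. left; apply Rinv_0_lt_compat; auto.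
  - fold a. rewrite (sumk_div K a). field. lra.
Qed.

Lemma probw_none K loss t : (1 <= K)%nat -> probw K (ew_weight K loss None t).
Proof.
  intros HK. unfold probw, ew_weight.
  set (ind := fun j => if Req_EM_T (Lcum loss (t - 1) j) (Lstar K loss (t - 1)) then 1 else 0).
  assert (Hi : forall j, 0 <= ind j) by (intros; unfold ind; destruct Req_EM_T; lra).
  assert (HS : 1 <= sumk K ind).
  { destruct (Lstar_ex K loss (t-1) HK) as [j [Hj E]].
    apply Rle_trans with (ind j). unfold ind. destruct Req_EM_T; [lra|congruence].
    apply sumk_ge_term; auto. }
  split.
  - intros k Hk. unfold Rdiv. apply Rmult_le_pos; [apply (Hi k) | left; apply Rinv_0_lt_compat; fold ind; lra].
  - fold ind. rewrite (sumk_div K ind). field. lra.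
Qed.

Lemma hedge_bounds K w l : probw K w -> (forall k, (k < K)%nat -> 0 <= l k <= 1) ->
  0 <= sumk K (fun k => w k * l k) <= 1.
Proof.
  intros [Hw Hs] Hl. split.
  - apply sumk_nonneg. intros k Hk. specialize (Hw k Hk). specialize (Hl k Hk). nra.
  - rewrite <- Hs. apply sumk_le. intros k Hk. specialize (Hw k Hk). specialize (Hl k Hk). nra.
Qed.

Lemma round_inf K loss s : (1 <= K)%nat -> (forall k, (k < K)%nat -> 0 <= loss (S s) k <= 1) ->
  let h := hedge_loss K loss None (S s) in
  let d := mix_gap K loss None (S s) in
  (0 <= h <= 1) /\ (0 <= d <= 1).
Proof.
  intros HK Hl h d.
  assert (Hh : 0 <= h <= 1) by (apply hedge_bounds; auto; apply probw_none; auto).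
  split; auto.
  unfold d, mix_gap, mix_loss. fold h.
  replace (S s - 1)%nat with s by lia.
  assert (Hm : Lstar K loss s <= Lstar K loss (S s)).
  { destruct (Lstar_ex K loss (S s) HK) as [j [Hj E]]. rewrite E, Lcum_S.
    specialize (Hl j Hj). pose proof (Lstar_le K loss s j Hj). lra. }
  split; [|lra].
  destruct (probw_none K loss (S s) HK) as [Hw Hs].
  assert (sumk K (fun k => ew_weight K loss None (S s) k * (Lstar K loss (S s) - Lstar K loss s)) <= h).
  { apply sumk_le. intros k Hk. unfold ew_weight in *.
    replace (S s - 1)%nat with s in * by lia.
    specialize (Hw k Hk). destruct Req_EM_T as [E|E].
    - apply Rmult_le_compat_l; auto. pose proof (Lstar_le K loss (S s) k Hk).
      rewrite Lcum_S in H. lra.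
    - unfold Rdiv. rewrite Rmult_0_l, !Rmult_0_l. lra. }
  rewrite sumk_scalr, Hs in H. lra.
Qed.

Lemma lnK_pos K : (2 <= K)%nat -> 0 < ln (INR K).
Proof. intros. rewrite <- ln_1. apply ln_increasing; [lra|]. apply le_INR in H. simpl in H. lra. Qed.

Lemma ah_eta_S K loss s : ah_eta K loss (S s) = ah_rate K (ah_Delta K loss s).
Proof. unfold ah_eta. replace (S s - 1)%nat with s by lia. reflexivity. Qed.

Lemma round_ah K loss s : (2 <= K)%nat -> (forall k, (k < K)%nat -> 0 <= loss (S s) k <= 1) ->
  0 <= ah_Delta K loss s ->
  let D := ah_Delta K loss s in
  let h := hedge_loss K loss (ah_rate K D) (S s) in
  let d := mix_gap K loss (ah_rate K D) (S s) in
  (0 <= h <= 1) /\ (0 <= d <= 1) /\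
  2 * D * d + d ^ 2 <= ln (INR K) * (h * (1 - h)) + (2 * ln (INR K) / 3 + 1) * d.
Proof.
  intros HK Hl HD D h d.
  pose proof (lnK_pos K HK) as Hc. set (c := ln (INR K)) in *.
  unfold h, d, ah_rate. destruct (Req_EM_T D 0) as [E|E].
  - destruct (round_inf K loss s ltac:(lia) Hl) as [H1 H2]. split; auto. split; auto.
    rewrite E. assert (0 <= c * (hedge_loss K loss None (S s) * (1 - hedge_loss K loss None (S s)))) by
      (apply Rmult_le_pos; [lra| nra]).
    nra.
  - assert (HDp : 0 < D) by (fold D in HD; lra).
    assert (He : 0 < c / D) by (apply Rdiv_lt_0_compat; auto).
    destruct (probw_some K loss (c / D) (S s) ltac:(lia)) as [Hw Hs].
    destruct (round_fin K (ew_weight K loss (Some (c / D)) (S s)) (loss (S s)) (c / D) Hw Hs Hl He)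
      as [H1 [H2 H3]].
    unfold mix_gap, hedge_loss, mix_loss. change (ln (INR K)) with c.
    set (hh := sumk K (fun k => ew_weight K loss (Some (c / D)) (S s) k * loss (S s) k)) in *.
    set (dd := hh - - (1 / (c / D)) * ln (sumk K (fun k => ew_weight K loss (Some (c / D)) (S s) k * exp (- (c / D) * loss (S s) k)))) in *.
    split; auto. split; auto.
    assert (2 * D * ((1 - c / D / 3) * dd) <= 2 * D * (c / D / 2 * (hh * (1 - hh)))).
    { apply Rmult_le_compat_l; auto. lra. }
    replace (2 * D * ((1 - c / D / 3) * dd)) with (2 * D * dd - 2 * c / 3 * dd) in H by (field; lra).
    replace (2 * D * (c / D / 2 * (hh * (1 - hh)))) with (c * (hh * (1 - hh))) in H by (field; lra).
    assert (dd ^ 2 <= dd) by nra.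
    lra.
Qed.

Lemma D_nonneg K loss T : (2 <= K)%nat ->
  (forall t k, (1 <= t <= T)%nat -> (k < K)%nat -> 0 <= loss t k <= 1) ->
  forall s, (s <= T)%nat -> 0 <= ah_Delta K loss s.
Proof.
  intros HK Hl. induction s; intros Hs; simpl; [lra|].
  assert (0 <= ah_Delta K loss s) by (apply IHs; lia).
  destruct (round_ah K loss s HK (fun k Hk => Hl (S s) k ltac:(lia) Hk) H) as [_ [H2 _]]. lra.
Qed.

Lemma D_mono K loss T : (2 <= K)%nat ->
  (forall t k, (1 <= t <= T)%nat -> (k < K)%nat -> 0 <= loss t k <= 1) ->
  forall s, (S s <= T)%nat -> ah_Delta K loss s <= ah_Delta K loss (S s).
Proof.
  intros HK Hl s Hs. simpl.
  assert (0 <= ah_Delta K loss s) by (apply (D_nonneg K loss T); auto; lia).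
  destruct (round_ah K loss s HK (fun k Hk => Hl (S s) k ltac:(lia) Hk) H) as [_ [H2 _]]. lra.
Qed.

Definition Phi K loss t (eta : lrate) : R :=
  match eta with
  | Some e => - (1 / e) * ln (sumk K (fun k => exp (- e * Lcum loss t k)) / INR K)
  | None => Lstar K loss t
  end.

Lemma INR_pos K : (1 <= K)%nat -> 0 < INR K.
Proof. intros. apply lt_0_INR. lia. Qed.

Lemma sumexp_pos K f : (1 <= K)%nat -> 0 < sumk K (fun k => exp (f k)).
Proof. intros. apply Rlt_le_trans with (exp (f 0%nat)). apply exp_pos.
  apply (sumk_ge_term K (fun k => exp (f k))); [intros; left; apply exp_pos|lia]. Qed.

Lemma Phi_0 K loss eta : (1 <= K)%nat -> Phi K loss 0 eta = 0.
Proof.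
  intros HK. destruct eta as [e|]; simpl; [|apply Lstar_0].
  rewrite (sumk_ext K _ (fun _ => 1)) by (intros; rewrite Lcum_0, Rmult_0_r; apply exp_0).
  rewrite sumk_const. pose proof (INR_pos K HK).
  replace (INR K * 1 / INR K) with 1 by (field; lra). rewrite ln_1. ring.
Qed.

Lemma Phi_step K loss e s : (1 <= K)%nat ->
  mix_loss K loss (Some e) (S s) = Phi K loss (S s) (Some e) - Phi K loss s (Some e).
Proof.
  intros HK. unfold mix_loss, Phi, ew_weight. replace (S s - 1)%nat with s by lia.
  set (S0 := sumk K (fun j => exp (- e * Lcum loss s j))).
  set (S1 := sumk K (fun j => exp (- e * Lcum loss (S s) j))).
  assert (H0 : 0 < S0) by apply sumexp_pos, HK.
  assert (H1 : 0 < S1) by apply sumexp_pos, HK.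
  pose proof (INR_pos K HK).
  rewrite (sumk_ext K _ (fun k => exp (- e * Lcum loss (S s) k) / S0)).
  2:{ intros k Hk. rewrite Lcum_S. replace (- e * (Lcum loss s k + loss (S s) k)) with
        (- e * Lcum loss s k + - e * loss (S s) k) by ring. rewrite exp_plus. fold S0. field. lra. }
  rewrite sumk_div. fold S1.
  replace (S1 / S0) with ((S1 / INR K) / (S0 / INR K)) by (field; lra).
  rewrite ln_div' by (apply Rdiv_lt_0_compat; auto). ring.
Qed.

Lemma Phi_None_le K loss t e : (1 <= K)%nat -> 0 < e -> Phi K loss t None <= Phi K loss t (Some e).
Proof.
  intros HK He. simpl. pose proof (INR_pos K HK).
  set (Ls := Lstar K loss t).
  assert (sumk K (fun k => exp (- e * Lcum loss t k)) <= sumk K (fun _ => exp (- e * Ls))).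
  { apply sumk_le. intros k Hk. apply exp_le'. pose proof (Lstar_le K loss t k Hk). fold Ls in H0. nra. }
  rewrite sumk_const in H0.
  assert (ln (sumk K (fun k => exp (- e * Lcum loss t k)) / INR K) <= - e * Ls).
  { rewrite <- (ln_exp (- e * Ls)). apply ln_le'.
    apply Rdiv_lt_0_compat; auto; apply sumexp_pos; auto.
    apply Rmult_le_reg_l with (INR K); auto. field_simplify; lra. }
  assert (- (1 / e) * ln (sumk K (fun k => exp (- e * Lcum loss t k)) / INR K) >= - (1/e) * (- e * Ls)).
  { apply Rle_ge. apply Rmult_le_compat_neg_l; auto. assert (0 < 1/e) by (apply Rdiv_lt_0_compat; lra). lra. }
  replace (- (1/e) * (- e * Ls)) with Ls in H2 by (field; lra). lra.
Qed.

Lemma Phi_upper K loss t e : (1 <= K)%nat -> 0 < e ->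
  Phi K loss t (Some e) <= Lstar K loss t + ln (INR K) / e.
Proof.
  intros HK He. simpl. pose proof (INR_pos K HK).
  destruct (Lstar_ex K loss t HK) as [j [Hj E]].
  assert (exp (- e * Lstar K loss t) <= sumk K (fun k => exp (- e * Lcum loss t k))).
  { rewrite E. apply (sumk_ge_term K (fun k => exp (- e * Lcum loss t k))); auto.
    intros; left; apply exp_pos. }
  assert (- e * Lstar K loss t - ln (INR K) <= ln (sumk K (fun k => exp (- e * Lcum loss t k)) / INR K)).
  { rewrite <- (ln_exp (- e * Lstar K loss t)) at 1. rewrite <- ln_div' by (auto; apply exp_pos).
    apply ln_le'. apply Rdiv_lt_0_compat; auto; apply exp_pos.
    unfold Rdiv. apply Rmult_le_compat_r; auto. left; apply Rinv_0_lt_compat; auto. }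
  assert (- (1 / e) * ln (sumk K (fun k => exp (- e * Lcum loss t k)) / INR K) <= - (1/e) * (- e * Lstar K loss t - ln (INR K))).
  { apply Rmult_le_compat_neg_l; auto. assert (0 < 1/e) by (apply Rdiv_lt_0_compat; lra). lra. }
  replace (- (1/e) * (- e * Lstar K loss t - ln (INR K))) with (Lstar K loss t + ln (INR K) / e) in H2 by (field; lra).
  auto.
Qed.

Lemma Phi_mono K loss t e e' : (1 <= K)%nat -> 0 < e -> e <= e' ->
  Phi K loss t (Some e') <= Phi K loss t (Some e).
Proof.
  intros HK He Hee. simpl. pose proof (INR_pos K HK).
  set (L := fun k => Lcum loss t k).
  set (S := sumk K (fun k => exp (- e * L k))).
  set (S' := sumk K (fun k => exp (- e' * L k))).
  assert (HS : 0 < S) by apply sumexp_pos, HK.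
  assert (HS' : 0 < S') by apply sumexp_pos, HK.
  set (q := fun k => exp (- e * L k) / S).
  assert (Hq : forall k, 0 < q k) by (intros; apply Rdiv_lt_0_compat; auto; apply exp_pos).
  assert (Hq1 : sumk K q = 1) by (unfold q; rewrite sumk_div; fold S; field; lra).
  assert (Hq0 : forall k, (k < K)%nat -> 0 <= q k) by (intros; left; auto).
  assert (Hlq : forall k, ln (q k) = - e * L k - ln S).
  { intros. unfold q. rewrite ln_div', ln_exp; auto using exp_pos. }
  set (E := sumk K (fun k => q k * L k)).
  assert (J1 := jensen_ln K q (fun k => exp (- e' * L k) / q k) Hq0 Hq1
     (fun k _ => Rdiv_lt_0_compat _ _ (exp_pos _) (Hq k))). cbv beta in J1.
  rewrite (sumk_ext K (fun k => q k * (exp (- e' * L k) / q k)) (fun k => exp (- e' * L k))) in J1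
    by (intros; field; apply Rgt_not_eq, Hq).
  fold S' in J1.
  rewrite (sumk_ext K _ (fun k => (e - e') * (q k * L k) + ln S * q k)) in J1.
  2:{ intros k Hk. rewrite ln_div', ln_exp, Hlq; auto using exp_pos. ring. }
  rewrite sumk_plus, sumk_scal, sumk_scal, Hq1 in J1. fold E in J1.
  assert (J2 := jensen_ln K q (fun k => (1 / INR K) / q k) Hq0 Hq1
     (fun k _ => Rdiv_lt_0_compat _ _ (Rdiv_lt_0_compat _ _ Rlt_0_1 H) (Hq k))). cbv beta in J2.
  rewrite (sumk_ext K (fun k => q k * ((1 / INR K) / q k)) (fun k => 1 / INR K)) in J2
    by (intros; field; repeat split; first [lra | apply Rgt_not_eq, Hq]).
  rewrite sumk_const in J2. replace (INR K * (1 / INR K)) with 1 in J2 by (field; lra).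
  rewrite ln_1 in J2.
  rewrite (sumk_ext K _ (fun k => e * (q k * L k) + (ln S - ln (INR K)) * q k)) in J2.
  2:{ intros k Hk.
      assert (E1 : ln (1 / INR K / q k) = ln (1 / INR K) - ln (q k)) by
        (apply ln_div'; [apply Rdiv_lt_0_compat; lra | apply Hq]).
      assert (E2 : ln (1 / INR K) = ln 1 - ln (INR K)) by (apply ln_div'; lra).
      rewrite E1, E2, ln_1, Hlq. ring. }
  rewrite sumk_plus, sumk_scal, sumk_scal, Hq1 in J2. fold E in J2.
  rewrite !ln_div' by auto.
  set (P := ln S - ln (INR K)) in *. set (P' := ln S' - ln (INR K)).
  assert (Hmain : e' * P <= e * P').
  { assert (H1 : P' >= P - (e' - e) * E) by (unfold P, P'; lra).
    assert (H2 : e * P' >= e * (P - (e' - e) * E)) by (apply Rle_ge, Rmult_le_compat_l; lra).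
    assert (H3 : - e * E - P >= 0) by lra.
    assert (H4 : (e' - e) * (- e * E - P) >= 0) by (apply Rle_ge, Rmult_le_pos; lra).
    lra. }
  assert (HP : - (1 / e') * P' - - (1 / e) * P = (e' * P - e * P') / (e * e')) by (field; lra).
  assert ((e' * P - e * P') / (e * e') <= 0).
  { assert (0 < / (e * e')) by (apply Rinv_0_lt_compat; nra).
    unfold Rdiv. assert (e' * P - e * P' <= 0) by lra. nra. }
  lra.
Qed.

Lemma sumt_ext t f g : (forall s, (1 <= s <= t)%nat -> f s = g s) -> sumt t f = sumt t g.
Proof. induction t; simpl; intros H; auto. rewrite IHt by (intros; apply H; lia). rewrite H by lia. auto. Qed.

Lemma sumt_le t f g : (forall s, (1 <= s <= t)%nat -> f s <= g s) -> sumt t f <= sumt t g.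
Proof. induction t; simpl; intros H; [lra|]. assert (f (S t) <= g (S t)) by (apply H; lia).
  assert (sumt t f <= sumt t g) by (apply IHt; intros; apply H; lia). lra. Qed.

Lemma sumt_plus t f g : sumt t (fun k => f k + g k) = sumt t f + sumt t g.
Proof. induction t; simpl; [lra|]. rewrite IHt. ring. Qed.

Lemma sumt_minus t f g : sumt t (fun k => f k - g k) = sumt t f - sumt t g.
Proof. induction t; simpl; [lra|]. rewrite IHt. ring. Qed.

Lemma sumt_scal t a f : sumt t (fun k => a * f k) = a * sumt t f.
Proof. induction t; simpl; [lra|]. rewrite IHt. ring. Qed.

Lemma sumt_const t a : sumt t (fun _ => a) = INR t * a.
Proof. induction t; simpl sumt; [simpl; lra|]. rewrite IHt, S_INR. ring. Qed.

Lemma var_bound T f : (1 <= T)%nat ->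
  sumt T (fun s => f s * (1 - f s)) <= sumt T f * (INR T - sumt T f) / INR T.
Proof.
  intros HT. pose proof (INR_pos T HT) as HTp. set (Hs := sumt T f). set (a := Hs / INR T).
  assert (0 <= sumt T (fun s => (f s - a) ^ 2)).
  { apply Rle_trans with (sumt T (fun _ => 0)); [rewrite sumt_const; lra | apply sumt_le; intros; apply pow2_ge_0]. }
  rewrite (sumt_ext T _ (fun s => (f s * f s - (2 * a) * f s) + a ^ 2)) in H by (intros; ring).
  rewrite sumt_plus, sumt_minus, sumt_scal, sumt_const in H. fold Hs in H.
  rewrite (sumt_ext T _ (fun s => f s - f s * f s)) by (intros; ring).
  rewrite sumt_minus. fold Hs.
  assert (Hs * (INR T - Hs) / INR T = Hs - 2 * a * Hs + INR T * a ^ 2) by (unfold a; field; lra).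
  lra.
Qed.

Lemma quad x a b : 0 <= x -> 0 <= a -> 0 <= b -> x ^ 2 <= a + b * x -> x <= sqrt a + b.
Proof.
  intros Hx Ha Hb Hq. pose proof (sqrt_pos a). pose proof (sqrt_sqrt a Ha).
  destruct (Rle_lt_dec x (sqrt a + b)); auto.
  assert (x * x > x * (sqrt a + b)) by (apply Rmult_lt_compat_l; lra).
  assert (x * sqrt a >= sqrt a * sqrt a) by nra. nra.
Qed.

Lemma Lcum_bounds K loss T : (forall t k, (1 <= t <= T)%nat -> (k < K)%nat -> 0 <= loss t k <= 1) ->
  forall t k, (t <= T)%nat -> (k < K)%nat -> 0 <= Lcum loss t k <= INR t.
Proof.
  intros Hl. induction t; intros k Ht Hk; [rewrite Lcum_0; simpl; lra|].
  rewrite Lcum_S, S_INR. specialize (IHt k ltac:(lia) Hk). specialize (Hl (S t) k ltac:(lia) Hk). lra.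
Qed.

Lemma Delta_sum K loss t : ah_Delta K loss t = sumt t (fun s => mix_gap K loss (ah_eta K loss s) s).
Proof. induction t; simpl; auto. rewrite ah_eta_S, <- IHt. auto. Qed.

Lemma H_decomp K loss T : ah_H K loss T =
  sumt T (fun s => mix_loss K loss (ah_eta K loss s) s) + ah_Delta K loss T.
Proof.
  rewrite Delta_sum, <- sumt_plus. unfold ah_H. apply sumt_ext. intros. unfold mix_gap. ring.
Qed.

Lemma eta_step K loss T : (2 <= K)%nat ->
  (forall t k, (1 <= t <= T)%nat -> (k < K)%nat -> 0 <= loss t k <= 1) ->
  forall s, (S s <= T)%nat -> Phi K loss s (ah_eta K loss s) <= Phi K loss s (ah_eta K loss (S s)).
Proof.
  intros HK Hl s Hs. destruct s as [|r].
  - rewrite !Phi_0 by lia. lra.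
  - rewrite !ah_eta_S.
    pose proof (D_mono K loss T HK Hl r ltac:(lia)).
    pose proof (D_nonneg K loss T HK Hl r ltac:(lia)).
    pose proof (lnK_pos K HK).
    unfold ah_rate. destruct (Req_EM_T (ah_Delta K loss (S r)) 0) as [E1|E1];
      destruct (Req_EM_T (ah_Delta K loss r) 0) as [E2|E2].
    + lra.
    + lra.
    + apply Phi_None_le; [lia|]. apply Rdiv_lt_0_compat; lra.
    + apply Phi_mono; [lia| apply Rdiv_lt_0_compat; lra|].
      apply Rmult_le_compat_l; [lra|]. apply Rinv_le_contravar; lra.
Qed.

Lemma mix_step K loss s eta : (1 <= K)%nat ->
  mix_loss K loss eta (S s) = Phi K loss (S s) eta - Phi K loss s eta.
Proof.
  intros HK. destruct eta as [e|]. apply Phi_step; auto.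
  simpl. replace (s - 0)%nat with s by lia. reflexivity.
Qed.

Lemma M_tele K loss T : (2 <= K)%nat ->
  (forall t k, (1 <= t <= T)%nat -> (k < K)%nat -> 0 <= loss t k <= 1) ->
  forall t, (t <= T)%nat -> sumt t (fun s => mix_loss K loss (ah_eta K loss s) s) <= Phi K loss t (ah_eta K loss t).
Proof.
  intros HK Hl. induction t; intros Ht.
  - simpl. rewrite Phi_0 by lia. lra.
  - simpl sumt. rewrite mix_step by lia.
    pose proof (IHt ltac:(lia)). pose proof (eta_step K loss T HK Hl t Ht). lra.
Qed.

Lemma Delta_sq K loss T : (2 <= K)%nat ->
  (forall t k, (1 <= t <= T)%nat -> (k < K)%nat -> 0 <= loss t k <= 1) ->
  forall t, (t <= T)%nat ->
  ah_Delta K loss t ^ 2 <= ln (INR K) * sumt t (fun s => hedge_loss K loss (ah_eta K loss s) s *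
                                                   (1 - hedge_loss K loss (ah_eta K loss s) s))
                            + (2 * ln (INR K) / 3 + 1) * ah_Delta K loss t.
Proof.
  intros HK Hl. induction t; intros Ht.
  - simpl. lra.
  - pose proof (IHt ltac:(lia)).
    pose proof (D_nonneg K loss T HK Hl t ltac:(lia)).
    destruct (round_ah K loss t HK (fun k Hk => Hl (S t) k ltac:(lia) Hk) H0) as [_ [_ H3]].
    simpl ah_Delta. simpl sumt. rewrite ah_eta_S. nra.
Qed.

Lemma K1_round loss s : hedge_loss 1 loss None (S s) = loss (S s) 0%nat /\
                        mix_loss 1 loss None (S s) = loss (S s) 0%nat.
Proof.
  unfold hedge_loss, mix_loss, ew_weight, Lstar. simpl. replace (s - 0)%nat with s by lia.
  split.
  - destruct Req_EM_T as [E|E]; [field| congruence].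
  - unfold Lcum. simpl. ring.
Qed.

Lemma K1_Delta loss t : ah_Delta 1 loss t = 0.
Proof.
  induction t; simpl; auto. rewrite IHt. unfold ah_rate.
  destruct Req_EM_T as [_|E]; [|lra]. unfold mix_gap.
  destruct (K1_round loss t) as [A B]. rewrite A, B. ring.
Qed.

Lemma K1_regret loss T : ah_regret 1 loss T = 0.
Proof.
  unfold ah_regret, ah_H.
  rewrite (sumt_ext T _ (fun s => loss s 0%nat)).
  - unfold Lstar. simpl. unfold Lcum. ring.
  - intros s Hs. destruct s as [|r]; [lia|]. rewrite ah_eta_S, K1_Delta. unfold ah_rate.
    destruct Req_EM_T as [_|E]; [|lra]. apply K1_round.
Qed.

Theorem theorem8 (K T : nat) (loss : nat -> nat -> R) :
  (1 <= K)%nat -> (1 <= T)%nat ->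
  (forall t k, (1 <= t <= T)%nat -> (k < K)%nat -> 0 <= loss t k <= 1) ->
  ah_regret K loss T <=
    2 * sqrt (Lstar K loss T * (INR T - Lstar K loss T) / INR T * ln (INR K))
    + 16 / 3 * ln (INR K) + 2.
Proof.
  intros HK HT Hl.
  pose proof (sqrt_pos (Lstar K loss T * (INR T - Lstar K loss T) / INR T * ln (INR K))) as Hsq.
  destruct (Nat.eq_dec K 1) as [E|E].
  { subst. rewrite K1_regret. assert (E1 : ln (INR 1) = 0) by (simpl; apply ln_1). rewrite E1 in *. lra. }
  assert (HK2 : (2 <= K)%nat) by lia.
  pose proof (lnK_pos K HK2) as Hc.
  set (c := ln (INR K)) in *.
  destruct T as [|T0]; [lia|].
  pose proof (INR_pos (S T0) HT) as HTp.
  set (T := S T0) in *.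
  set (Lst := Lstar K loss T) in *.
  assert (HL : 0 <= Lst <= INR T).
  { destruct (Lstar_ex K loss T HK) as [j [Hj Ej]]. unfold Lst; rewrite Ej.
    apply (Lcum_bounds K loss T Hl); auto. }
  set (H := ah_H K loss T).
  set (M := sumt T (fun s => mix_loss K loss (ah_eta K loss s) s)).
  set (D := ah_Delta K loss T). set (D0 := ah_Delta K loss T0).
  assert (Hdec : H = M + D) by apply H_decomp.
  assert (HM : M <= Lst + D0).
  { pose proof (M_tele K loss T HK2 Hl T (le_n _)). fold M in H0.
    unfold T in H0 at 2. rewrite ah_eta_S in H0. fold D0 in H0.
    assert (0 <= D0) by (apply (D_nonneg K loss T HK2 Hl); unfold T; lia).
    unfold ah_rate in H0. change (ln (INR K)) with c in H0. destruct (Req_EM_T D0 0).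
    - simpl in H0. fold Lst in H0. lra.
    - assert (0 < D0) by lra.
      pose proof (Phi_upper K loss T (c / D0) HK (Rdiv_lt_0_compat _ _ Hc H2)).
      change (ln (INR K)) with c in H3. fold Lst in H3. replace (c / (c / D0)) with D0 in H3 by (field; lra). lra. }
  assert (HD0 : 0 <= D0) by (apply (D_nonneg K loss T HK2 Hl); unfold T; lia).
  assert (HD0D : D0 <= D) by (apply (D_mono K loss T HK2 Hl); unfold T; lia).
  pose proof (Delta_sq K loss T HK2 Hl T (le_n _)) as Hsq2. fold c D in Hsq2.
  pose proof (var_bound T (fun s => hedge_loss K loss (ah_eta K loss s) s) HT) as HV.
  change (sumt T (fun s => hedge_loss K loss (ah_eta K loss s) s)) with H in HV.
  set (V := sumt T (fun s => hedge_loss K loss (ah_eta K loss s) s *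
                           (1 - hedge_loss K loss (ah_eta K loss s) s))) in *.
  unfold ah_regret. fold H Lst.
  set (R := H - Lst).
  destruct (Rle_lt_dec R 0) as [HR|HR].
  { assert (0 <= c) by lra. lra. }
  set (B := Lst * (INR T - Lst) / INR T).
  assert (HB : 0 <= B).
  { unfold B. unfold Rdiv. apply Rmult_le_pos; [nra|left; apply Rinv_0_lt_compat; lra]. }
  assert (HVB : V <= B + R).
  { assert (H * (INR T - H) / INR T - B = R * (INR T - 2 * Lst - R) / INR T)
      by (unfold B, R; field; lra).
    assert (R * (INR T - 2 * Lst - R) / INR T <= R).
    { apply Rmult_le_reg_l with (INR T); auto.
      replace (INR T * (R * (INR T - 2 * Lst - R) / INR T)) with (R * (INR T - 2 * Lst - R)) by (field; lra).
      nra. }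
    lra. }
  assert (HDq : D ^ 2 <= c * B + (2 * c + (2 * c / 3 + 1)) * D).
  { assert (c * V <= c * (B + R)) by (apply Rmult_le_compat_l; lra).
    assert (ER : R = H - Lst) by reflexivity.
    assert (R <= 2 * D) by lra.
    assert (c * R <= c * (2 * D)) by (apply Rmult_le_compat_l; lra). lra. }
  assert (HD : 0 <= D) by lra.
  pose proof (quad D (c * B) (2 * c + (2 * c / 3 + 1)) HD ltac:(nra) ltac:(lra) HDq).
  assert (ER : R = H - Lst) by reflexivity.
  rewrite (Rmult_comm B c). fold B. lra.
Qed.
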